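(* For every $e\ge1$, the subgroup $\hat G^{(e)}\subseteq\mathrm{Aut}(X_{PGL_2(F)})$ is weakly two-transitive: for any vertices $x_1,x_2,y_1,y_2$ with $d(x_1,x_2)=d(y_1,y_2)$ there exists $g\in \hat G^{(e)}$ with $g(x_1)=y_1$ and $g(x_2)=y_2$.
   Context: Let $F$ be a non-archimedean local field with ring of integers $\mathfrak{o}$, uniformizer $\varpi$, and finite residue field of cardinality $q$. $X=X_{PGL_2(F)}$ is the Bruhat–Tits tree of $PGL_2(F)$: its vertices are homothety classes $[L]$ (under $F^\times$) of $\mathfrak{o}$-lattices $L\subset F^2$, and $[L],[L']$ are joined by an edge iff there are representatives with $\varpi L\subsetneq L'\subsetneq L$; it is a $(q+1)$-regular tree. $d$ is the path-length distance on vertices; $\mathrm{Aut}(X)$ is the group of distance-preserving bijections of the vertex set, with the topology of pointwise convergence. $GL_2(F)$ acts on lattices through its linear action on $F^2$, the centre acts trivially, and this gives an embedding $PGL_2(F)\hookrightarrow\mathrm{Aut}(X)$. For an edge $\eta=\{x_1,x_2\}$ and $e\ge1$, $B(\eta,e)=\{y: \min(d(y,x_1),d(y,x_2))\le e\}$. Define $\hat G^{(e)}=\{g\in\mathrm{Aut}(X):\ \text{for every edge }\eta\ \text{there is } g'\in PGL_2(F)\text{ with } g|_{B(\eta,e)}=g'|_{B(\eta,e)}\}$. *)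

(* Defs.v *)
From HB Require Import structures.
From mathcomp Require Import all_boot all_order all_algebra.
Set Implicit Arguments. Unset Strict Implicit. Unset Printing Implicit Defensive.
Import Order.TTheory GRing.Theory Num.Theory.
Local Open Scope ring_scope.

Section BT.
Variable F : fieldType.
(* a normalized discrete valuation; its value at 0 is irrelevant (0 is treated as +oo) *)
Variable v : F -> int.

Definition vge (x : F) (k : int) : Prop := x = 0 \/ k <= v x.

Definition is_discrete_valuation : Prop :=
  [/\ (forall x y, x != 0 -> y != 0 -> v (x * y) = v x + v y),
      (forall x y, x != 0 -> y != 0 -> x + y != 0 -> Num.min (v x) (v y) <= v (x + y)) &
      (forall k : int, exists x, x != 0 /\ v x = k)].

Definition inO (x : F) : Prop := vge x 0.

(* the residue field o / m is finite *)
Definition finite_residue_field : Prop :=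
  exists s : seq F, (forall r, r \in s -> inO r) /\
    forall a, inO a -> exists2 r, r \in s & vge (a - r) 1.

Definition complete_valuation : Prop :=
  forall u : nat -> F,
    (forall k : int, exists N, forall m n, (N <= m)%N -> (N <= n)%N -> vge (u m - u n) k) ->
    exists l, forall k : int, exists N, forall n, (N <= n)%N -> vge (u n - l) k.

Definition nonarch_local_field : Prop :=
  [/\ is_discrete_valuation, finite_residue_field & complete_valuation].

(* o-lattices in F^2 (row vectors): L = o e1 + o e2 for a basis (e1,e2) = rows of g *)
Definition lattice (L : 'rV[F]_2 -> Prop) : Prop :=
  exists2 g : 'M[F]_2, g \in unitmx &
    forall w, L w <-> exists a : 'rV[F]_2, (forall i, inO (a 0 i)) /\ w = a *m g.

Definition lsubset (L L' : 'rV[F]_2 -> Prop) : Prop := forall w, L w -> L' w.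

Definition hclass (L : 'rV[F]_2 -> Prop) : ('rV[F]_2 -> Prop) -> Prop :=
  fun L' => exists c : F, c != 0 /\ forall w, L' w <-> L (c *: w).

Definition is_vertex (C : ('rV[F]_2 -> Prop) -> Prop) : Prop :=
  exists L, lattice L /\ C = hclass L.

Definition vertex := {C : ('rV[F]_2 -> Prop) -> Prop | is_vertex C}.

Variable pi : F.

Definition scaleL (c : F) (L : 'rV[F]_2 -> Prop) : 'rV[F]_2 -> Prop :=
  fun w => L (c^-1 *: w).

Definition adj (x y : vertex) : Prop :=
  exists L L', sval x L /\ sval y L' /\
    lsubset (scaleL pi L) L' /\ ~ lsubset L' (scaleL pi L) /\
    lsubset L' L /\ ~ lsubset L L'.

Inductive walk : vertex -> vertex -> nat -> Prop :=
| walk0 x : walk x x 0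
| walkS x y z n : adj x y -> walk y z n -> walk x z n.+1.

Definition dist (x y : vertex) (n : nat) : Prop :=
  walk x y n /\ forall m, walk x y m -> (n <= m)%N.

Definition is_aut (g : vertex -> vertex) : Prop :=
  bijective g /\ forall x y n, dist x y n <-> dist (g x) (g y) n.

(* action of A in GL_2(F) on homothety classes: [L] |-> [L A] *)
Definition actC (A : 'M[F]_2) (C : ('rV[F]_2 -> Prop) -> Prop) :
  ('rV[F]_2 -> Prop) -> Prop := fun L' => C (fun w => L' (w *m A)).

Definition in_ball (x1 x2 : vertex) (e : nat) (y : vertex) : Prop :=
  exists n, (n <= e)%N /\ (dist y x1 n \/ dist y x2 n).

Definition in_Ghat (e : nat) (g : vertex -> vertex) : Prop :=
  is_aut g /\
  forall x1 x2, adj x1 x2 ->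
    exists2 A : 'M[F]_2, A \in unitmx &
      forall y, in_ball x1 x2 e y -> sval (g y) = actC A (sval y).

End BT.

(* Main.v *)
Require Import Defs.
From HB Require Import structures.
From mathcomp Require Import all_boot all_order all_algebra.
From mathcomp Require Import ring zify.
From Stdlib Require Import ProofIrrelevance FunctionalExtensionality PropExtensionality Classical.
Import Order.TTheory GRing.Theory Num.Theory.
Local Open Scope ring_scope.
Set Implicit Arguments. Unset Strict Implicit. Unset Printing Implicit Defensive.

Section Mx.
Variable F : fieldType.

Definition mk2 (a b c d : F) : 'M[F]_2 :=
  \matrix_(i, j) if i == 0 then (if j == 0 then a else b) else (if j == 0 then c else d).
Definition r2 (p q : F) : 'rV[F]_2 := \row_j (if j == 0 then p else q).

Lemma ord2P (P : 'I_2 -> Prop) : P 0 -> P 1 -> forall i, P i.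
Proof. by move=> H0 H1; case=> [[|[|//]]] Hi; [have -> : Ordinal Hi = 0 by apply: val_inj | have -> : Ordinal Hi = 1 by apply: val_inj]. Qed.

Lemma r2E (x : 'rV[F]_2) : x = r2 (x 0 0) (x 0 1).
Proof. apply/rowP; apply: ord2P; by rewrite !mxE. Qed.

Lemma r2_inj p q p' q' : r2 p q = r2 p' q' -> p = p' /\ q = q'.
Proof. move=> /rowP H; move: (H 0) (H 1); rewrite !mxE /=; done. Qed.

Lemma r2_mul p q a b c d : r2 p q *m mk2 a b c d = r2 (p * a + q * c) (p * b + q * d).
Proof.
apply/rowP; apply: ord2P; rewrite !mxE !big_ord_recl big_ord0 !mxE /= addr0; done.
Qed.

Lemma mk2_mul a b c d a' b' c' d' :
  mk2 a b c d *m mk2 a' b' c' d' =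
  mk2 (a * a' + b * c') (a * b' + b * d') (c * a' + d * c') (c * b' + d * d').
Proof.
apply/matrixP; apply: ord2P; apply: ord2P;
rewrite !mxE !big_ord_recl big_ord0 !mxE /= addr0; done.
Qed.

Lemma mk2_1 : mk2 1 0 0 1 = 1%:M.
Proof. apply/matrixP; apply: ord2P; apply: ord2P; by rewrite !mxE. Qed.

Lemma r2_add p q p' q' : r2 p q + r2 p' q' = r2 (p + p') (q + q').
Proof. apply/rowP; apply: ord2P; by rewrite !mxE. Qed.
Lemma r2_scale c p q : c *: r2 p q = r2 (c * p) (c * q).
Proof. apply/rowP; apply: ord2P; by rewrite !mxE. Qed.
Lemma mk2_scale c a b d e : c *: mk2 a b d e = mk2 (c * a) (c * b) (c * d) (c * e).
Proof. apply/matrixP; apply: ord2P; apply: ord2P; by rewrite !mxE. Qed.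

Lemma mk2_unit a b c d : a * d - b * c != 0 -> mk2 a b c d \in unitmx.
Proof.
move=> H. set D := a * d - b * c.
have := @mulmx1_unit _ _ (mk2 a b c d) (mk2 (d / D) (- b / D) (- c / D) (a / D)).
case; last done. rewrite mk2_mul -mk2_1; congr mk2; rewrite /D; field; done.
Qed.
End Mx.
Section Val.
Variable F : fieldType.
Variable v : F -> int.
Variable pi : F.
Hypothesis Hm : forall x y, x != 0 -> y != 0 -> v (x * y) = v x + v y.
Hypothesis Hu : forall x y, x != 0 -> y != 0 -> x + y != 0 -> Num.min (v x) (v y) <= v (x + y).
Hypothesis Hpi0 : pi != 0.
Hypothesis Hpi1 : v pi = 1.

Notation vge := (vge v).
Notation inO := (inO v).

Lemma v1 : v 1 = 0.
Proof. have := Hm (oner_neq0 F) (oner_neq0 F); rewrite mulr1; set a := v 1 => H; lia. Qed.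

Lemma vV x : x != 0 -> v x^-1 = - v x.
Proof. move=> Hx; have := Hm Hx (invr_neq0 Hx); rewrite mulfV // v1 => H; lia. Qed.

Lemma vN1 : v (-1) = 0.
Proof. have H1 : (-1 : F) != 0 by rewrite oppr_eq0 oner_neq0.
have := Hm H1 H1; rewrite mulrNN mulr1 v1 => H; lia. Qed.

Lemma vN x : x != 0 -> v (- x) = v x.
Proof. move=> Hx; have H1 : (-1 : F) != 0 by rewrite oppr_eq0 oner_neq0.
by rewrite -mulN1r Hm // vN1 add0r. Qed.

Lemma vge0 k : vge 0 k. Proof. by left. Qed.

Lemma vgeN x k : vge x k -> vge (- x) k.
Proof. case=> [->|H]; [by left; rewrite oppr0|].
case: (eqVneq x 0) => [->|Hx]; [by left; rewrite oppr0| by right; rewrite vN]. Qed.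

Lemma vgeD x y k : vge x k -> vge y k -> vge (x + y) k.
Proof.
case=> [->|Hx]; first by rewrite add0r.
case=> [->|Hy]; first by rewrite addr0; right.
case: (eqVneq x 0) => [->|nx]; first by rewrite add0r; right.
case: (eqVneq y 0) => [->|ny]; first by rewrite addr0; right.
case: (eqVneq (x + y) 0) => [->|nxy]; first by left.
right; apply: le_trans (Hu nx ny nxy).
by rewrite le_min Hx Hy.
Qed.

Lemma vgeB x y k : vge x k -> vge y k -> vge (x - y) k.
Proof. by move=> Hx Hy; apply: vgeD => //; apply: vgeN. Qed.

Lemma vgeM x y k l : vge x k -> vge y l -> vge (x * y) (k + l).
Proof.
case=> [->|Hx]; first by rewrite mul0r; left.
case=> [->|Hy]; first by rewrite mulr0; left.
case: (eqVneq x 0) => [->|nx]; first by rewrite mul0r; left.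
case: (eqVneq y 0) => [->|ny]; first by rewrite mulr0; left.
right; rewrite Hm //; lia.
Qed.

Lemma vge_weak x k l : l <= k -> vge x k -> vge x l.
Proof. move=> Hl [->|H]; [by left|right; lia]. Qed.

Lemma inOD x y : inO x -> inO y -> inO (x + y). Proof. exact: vgeD. Qed.
Lemma inOB x y : inO x -> inO y -> inO (x - y). Proof. exact: vgeB. Qed.
Lemma inON x : inO x -> inO (- x). Proof. exact: vgeN. Qed.
Lemma inOM x y : inO x -> inO y -> inO (x * y).
Proof. move=> Hx Hy; have := vgeM Hx Hy; by rewrite addr0. Qed.
Lemma inO1 : inO 1. Proof. by right; rewrite v1. Qed.
Lemma inO0 : inO 0. Proof. by left. Qed.
Lemma vge_pi : vge pi 1. Proof. by right; rewrite Hpi1. Qed.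
Lemma inO_pi : inO pi. Proof. by right; rewrite Hpi1. Qed.
Lemma inO_exp n : inO (pi ^+ n).
Proof. elim: n => [|n IH]; first by rewrite expr0; exact: inO1.
by rewrite exprS; apply: inOM => //; exact: inO_pi. Qed.

Lemma unitO x : inO x -> ~ vge x 1 -> x != 0 /\ v x = 0.
Proof.
case=> [->|H] N; first by case: N; left.
case: (eqVneq x 0) => [Ex|nx]; first by case: N; left.
split=> //; apply/eqP; rewrite eq_le H andbT; apply: contra_notT N => H'.
by right; rewrite -ltNge in H'; lia.
Qed.

Lemma inOV x : x != 0 -> v x = 0 -> inO x^-1.
Proof. by move=> nx Hx; right; rewrite vV // Hx. Qed.

Lemma inO_unitV x : inO x -> ~ vge x 1 -> inO x^-1.
Proof. by move=> H1 H2; case: (unitO H1 H2) => ??; apply: inOV. Qed.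

Lemma divpi x : vge x 1 -> inO (x / pi).
Proof.
case=> [->|H]; first by rewrite mul0r; left.
case: (eqVneq x 0) => [->|nx]; first by rewrite mul0r; left.
right; rewrite Hm ?invr_eq0 // vV // Hpi1; lia.
Qed.

Lemma mulpi x : inO x -> vge (pi * x) 1.
Proof. move=> H; have := vgeM vge_pi H; by rewrite addr0. Qed.

Lemma notO_piV : ~ inO pi^-1.
Proof. case=> [|]; first by move/eqP; rewrite invr_eq0 (negbTE Hpi0).
by rewrite vV // Hpi1. Qed.

Lemma vge1_inO x : vge x 1 -> inO x. Proof. exact: vge_weak. Qed.

Lemma not_vge_pivge x : inO x -> ~ vge x 1 -> ~ inO (x / pi).
Proof.
move=> Hx Nx; case: (unitO Hx Nx) => nx vx.
case=> [/eqP|]; first by rewrite mulf_eq0 invr_eq0 (negbTE nx) (negbTE Hpi0).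
rewrite Hm ?invr_eq0 // vV // Hpi1 vx; lia.
Qed.


Definition std (a : 'rV[F]_2) := forall i, inO (a 0 i).
Definition Lat (M : 'M[F]_2) : 'rV[F]_2 -> Prop :=
  fun x => exists a : 'rV[F]_2, (forall i, inO (a 0 i)) /\ x = a *m M.

Lemma pext (P Q : Prop) : (P <-> Q) -> P = Q.
Proof. exact: propositional_extensionality. Qed.

Lemma std_r2 p q : std (r2 p q) <-> inO p /\ inO q.
Proof. split; first by move=> H; move: (H 0) (H 1); rewrite !mxE.
by case=> Hp Hq; apply: ord2P; rewrite !mxE. Qed.

Lemma stdE a : std a <-> inO (a 0 0) /\ inO (a 0 1).
Proof. by rewrite {1}(r2E a); apply: std_r2. Qed.

Lemma LatE M x : Lat M x <-> exists p q, [/\ inO p, inO q & x = r2 p q *m M].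
Proof. split.
- case=> a [Ha ->]; exists (a 0 0), (a 0 1); split; try exact: Ha; by rewrite -r2E.
- case=> p [q [Hp Hq ->]]; exists (r2 p q); split => //; exact/std_r2.
Qed.

Lemma Lat0 M : Lat M 0.
Proof. exists 0; split; [move=> i; rewrite mxE; exact: inO0 | by rewrite mul0mx]. Qed.

Lemma LatD M x y : Lat M x -> Lat M y -> Lat M (x + y).
Proof. case=> a [Ha ->] [b [Hb ->]]; exists (a + b); split; last by rewrite mulmxDl.
move=> i; rewrite mxE; exact: inOD. Qed.

Lemma LatZ M c x : inO c -> Lat M x -> Lat M (c *: x).
Proof. move=> Hc [a [Ha ->]]; exists (c *: a); split; last by rewrite scalemxAl.
move=> i; rewrite mxE; exact: inOM. Qed.

Lemma LatN M x : Lat M x -> Lat M (- x).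
Proof. move=> H; rewrite -scaleN1r; apply: LatZ => //; apply: inON; exact: inO1. Qed.

Lemma LatB M x y : Lat M x -> Lat M y -> Lat M (x - y).
Proof. by move=> H1 H2; apply: LatD => //; apply: LatN. Qed.

Lemma Lat_row M p q : inO p -> inO q -> Lat M (r2 p q *m M).
Proof. by move=> Hp Hq; apply/LatE; exists p, q. Qed.

Lemma LatMh (M h : 'M[F]_2) : h \in unitmx -> Lat (M *m h) = fun x => Lat M (x *m invmx h).
Proof.
move=> Hh; apply: functional_extensionality => x; apply: pext; split.
- case=> a [Ha ->]; exists a; split => //; by rewrite mulmxA mulmxK.
- case=> a [Ha Ex]; exists a; split => //; by rewrite mulmxA -Ex mulmxKV.
Qed.

Lemma Lat1 : Lat 1%:M = std.
Proof. apply: functional_extensionality => x; apply: pext; split.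
- by case=> a [Ha ->]; rewrite mulmx1.
- by move=> H; exists x; rewrite mulmx1. Qed.

Lemma LatZm (M : 'M[F]_2) c : c != 0 -> Lat (c *: M) = fun x => Lat M (c^-1 *: x).
Proof.
move=> Hc; apply: functional_extensionality => x; apply: pext; split.
- case=> a [Ha ->]; exists a; split => //; by rewrite -scalemxAr scalerA mulVf // scale1r.
- case=> a [Ha Ex]; exists a; split => //; by rewrite -scalemxAr -Ex scalerA mulfV // scale1r.
Qed.

Definition oent (Q : 'M[F]_2) := forall i j, inO (Q i j).

Lemma std_mul a Q : std a -> oent Q -> std (a *m Q).
Proof. move=> Ha HQ j; rewrite mxE !big_ord_recl big_ord0 addr0.
by apply: inOD; apply: inOM. Qed.

Lemma mk2_oent a b c d : inO a -> inO b -> inO c -> inO d -> oent (mk2 a b c d).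
Proof. move=> *; apply: ord2P; apply: ord2P; by rewrite mxE. Qed.

Lemma Lat_GLo Q Q' M : oent Q -> oent Q' -> Q' *m Q = 1%:M -> Lat (Q *m M) = Lat M.
Proof.
move=> HQ HQ' E; apply: functional_extensionality => x; apply: pext; split.
- case=> a [Ha ->]; exists (a *m Q); split; [exact: std_mul | by rewrite mulmxA].
- case=> a [Ha ->]; exists (a *m Q'); split; first exact: std_mul.
  by rewrite mulmxA -(mulmxA a) E mulmx1.
Qed.

Lemma lattice_Lat g : g \in unitmx -> lattice v (Lat g).
Proof. by move=> Hg; exists g. Qed.

Lemma lattice_eq L : lattice v L -> exists2 g, g \in unitmx & L = Lat g.
Proof. case=> g Hg H; exists g => //; apply: functional_extensionality => x; apply: pext; exact: H. Qed.

Definition Vc (h : 'M[F]_2) := if h \in unitmx then hclass (Lat h) else hclass (Lat 1%:M).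
Lemma Vc_vertex h : is_vertex v (Vc h).
Proof. rewrite /Vc; case: ifP => H.
- by exists (Lat h); split => //; apply: lattice_Lat.
- by exists (Lat 1%:M); split => //; apply: lattice_Lat; apply: unitmx1. Qed.
Definition V h : vertex v := exist _ (Vc h) (Vc_vertex h).

Lemma V_sval h : h \in unitmx -> sval (V h) = hclass (Lat h).
Proof. by move=> H; rewrite /= /Vc H. Qed.

Lemma vert_eq (x y : vertex v) : sval x = sval y -> x = y.
Proof. apply: eq_sig_hprop => *; exact: proof_irrelevance. Qed.

Lemma V_surj (x : vertex v) : exists2 h, h \in unitmx & x = V h.
Proof. case: x => C [L [HL EC]]; case: (lattice_eq HL) => g Hg EL.
exists g => //; apply: vert_eq; by rewrite V_sval //= EC EL. Qed.

Lemma V_eq h h' : h \in unitmx -> h' \in unitmx -> Lat h = Lat h' -> V h = V h'.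
Proof. by move=> H H' E; apply: vert_eq; rewrite !V_sval // E. Qed.

Lemma unitZ c (h : 'M[F]_2) : c != 0 -> h \in unitmx -> c *: h \in unitmx.
Proof. by move=> Hc Hh; rewrite unitmxZ // unitfE. Qed.

Lemma V_hom h c : h \in unitmx -> c != 0 -> V (c *: h) = V h.
Proof.
move=> Hh Hc; apply: vert_eq; rewrite !V_sval ?unitZ //.
apply: functional_extensionality => L; apply: pext; rewrite /hclass LatZm //; split.
- case=> c' [Hc' H]; exists (c^-1 * c'); split; first by rewrite mulf_neq0 // invr_eq0.
  by move=> w; rewrite H scalerA.
- case=> c' [Hc' H]; exists (c * c'); split; first by rewrite mulf_neq0.
  by move=> w; rewrite H scalerA mulrA mulVf // mul1r.
Qed.

Lemma V_mem h L : h \in unitmx -> sval (V h) L ->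
  exists c, [/\ c != 0, c *: h \in unitmx & L = Lat (c *: h)].
Proof.
move=> Hh; rewrite V_sval // => -[c [Hc H]]; exists c^-1.
have Hc' : c^-1 != 0 by rewrite invr_eq0.
split => //; first exact: unitZ.
apply: functional_extensionality => w; apply: pext; rewrite LatZm // invrK; exact: H.
Qed.

Lemma V_GLo Q Q' h : oent Q -> oent Q' -> Q' *m Q = 1%:M -> h \in unitmx -> V (Q *m h) = V h.
Proof.
move=> HQ HQ' E Hh; apply: V_eq => //; last first. have := @Lat_GLo Q Q' h HQ HQ' E. done.
rewrite unitmx_mul Hh andbT; by case: (mulmx1_unit E).
Qed.


Lemma actC_hclass g A : g \in unitmx -> A \in unitmx ->
  actC A (hclass (Lat g)) = hclass (Lat (g *m A)).
Proof.
move=> Hg HA; apply: functional_extensionality => L'; apply: pext.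
rewrite /actC /hclass LatMh //; split.
- case=> c [Hc H]; exists c; split => // w.
  have := H (w *m invmx A); rewrite mulmxKV // -scalemxAl; done.
- case=> c [Hc H]; exists c; split => // w.
  by rewrite H -scalemxAl mulmxK.
Qed.

Definition fC (A : 'M[F]_2) (C : ('rV[F]_2 -> Prop) -> Prop) := if A \in unitmx then actC A C else C.

Lemma fC_vertex A (x : vertex v) : is_vertex v (fC A (sval x)).
Proof.
rewrite /fC; case: ifP => HA; last exact: proj2_sig x.
case: (V_surj x) => h Hh ->; rewrite V_sval // actC_hclass //.
exists (Lat (h *m A)); split => //; apply: lattice_Lat; by rewrite unitmx_mul Hh HA.
Qed.

Definition fA A (x : vertex v) : vertex v := exist _ (fC A (sval x)) (fC_vertex A x).

Lemma fA_sval A x : A \in unitmx -> sval (fA A x) = actC A (sval x).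
Proof. move=> HA; change (fC A (sval x) = actC A (sval x)); by rewrite /fC HA. Qed.

Lemma fA_V A h : A \in unitmx -> h \in unitmx -> fA A (V h) = V (h *m A).
Proof.
move=> HA Hh; apply: vert_eq.
rewrite fA_sval //.
rewrite V_sval // actC_hclass // V_sval //.
by rewrite unitmx_mul Hh HA.
Qed.

Lemma fA_K A : A \in unitmx -> cancel (fA A) (fA (invmx A)).
Proof.
move=> HA x; case: (V_surj x) => h Hh ->.
rewrite fA_V // fA_V ?unitmx_inv ?mulmxK //; by rewrite unitmx_mul Hh HA.
Qed.

Lemma fA_KV A : A \in unitmx -> cancel (fA (invmx A)) (fA A).
Proof.
move=> HA x; case: (V_surj x) => h Hh ->.
rewrite fA_V ?unitmx_inv // fA_V ?mulmxKV //; by rewrite unitmx_mul Hh unitmx_inv HA.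
Qed.

Definition Lm (A : 'M[F]_2) (L : 'rV[F]_2 -> Prop) := fun w => L (w *m invmx A).

Lemma lsub_Lm A P Q : A \in unitmx -> lsubset (Lm A P) (Lm A Q) <-> lsubset P Q.
Proof.
move=> HA; split => H w.
- move=> Pw; have := H (w *m A); rewrite /Lm mulmxK //; by apply.
- rewrite /Lm; exact: H.
Qed.

Lemma scaleL_Lm A L : scaleL pi (Lm A L) = Lm A (scaleL pi L).
Proof. apply: functional_extensionality => w; by rewrite /scaleL /Lm scalemxAl. Qed.

Lemma fA_mem A (x : vertex v) L : A \in unitmx -> sval x L -> sval (fA A x) (Lm A L).
Proof.
move=> HA H; rewrite fA_sval // /actC.
have -> : (fun w => Lm A L (w *m A)) = L; last done.
apply: functional_extensionality => w; by rewrite /Lm mulmxK.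
Qed.

Lemma fA_adj A x y : A \in unitmx -> adj pi x y -> adj pi (fA A x) (fA A y).
Proof.
move=> HA [L [L' [Hx [Hy [H1 [H2 [H3 H4]]]]]]].
exists (Lm A L), (Lm A L'); split; first exact: fA_mem.
split; first exact: fA_mem.
rewrite scaleL_Lm !lsub_Lm //.
Qed.

Lemma walk_map (f : vertex v -> vertex v) (x y : vertex v) n : (forall x y : vertex v, adj pi x y -> adj pi (f x) (f y)) ->
  walk pi x y n -> walk pi (f x) (f y) n.
Proof.
move=> Hf; elim=> [z|a b c m Hab _ IH]; first exact: walk0.
exact: walkS (Hf _ _ Hab) IH.
Qed.

Lemma fA_walk A x y n : A \in unitmx -> walk pi x y n <-> walk pi (fA A x) (fA A y) n.
Proof.
move=> HA; split; first by apply: walk_map => ??; exact: fA_adj.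
move=> H; have := walk_map (f := fA (invmx A)) _ H.
rewrite !fA_K //; apply => ??; apply: fA_adj; by rewrite unitmx_inv.
Qed.

Lemma fA_aut A : A \in unitmx -> is_aut pi (fA A).
Proof.
move=> HA; split.
- exists (fA (invmx A)); [exact: fA_K | exact: fA_KV].
- move=> x y n; rewrite /dist; split.
  + case=> H1 H2; split; first exact: (proj1 (@fA_walk A x y n HA) H1).
    move=> m Hw; apply: H2; exact: (proj2 (@fA_walk A x y m HA) Hw).
  + case=> H1 H2; split; first exact: (proj2 (@fA_walk A x y n HA) H1).
    move=> m Hw; apply: H2; exact: (proj1 (@fA_walk A x y m HA) Hw).
Qed.

Lemma fA_Ghat A e : A \in unitmx -> in_Ghat pi e (fA A).
Proof.
move=> HA; split; first exact: fA_aut.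
move=> x1 x2 _; exists A => // y _; by rewrite fA_sval.
Qed.


Lemma r2_mul_split (p q a b c d : F) : r2 p q *m mk2 a b c d = p *: r2 a b + q *: r2 c d.
Proof. by rewrite r2_mul !r2_scale r2_add. Qed.

Lemma piV0 : pi^-1 != 0. Proof. by rewrite invr_eq0. Qed.

Definition Dn (n : nat) := mk2 1 0 0 (pi ^+ n).

Lemma Dn_unit n : Dn n \in unitmx.
Proof. apply: mk2_unit; rewrite mulr0 subr0 mul1r; exact: expf_neq0. Qed.

Lemma Dn_mul i : Dn 1 *m Dn i = Dn i.+1.
Proof. rewrite /Dn mk2_mul; congr mk2; rewrite ?mulr0 ?mul0r ?mulr1 ?mul1r ?addr0 ?add0r // ?expr1; by rewrite exprS. Qed.

Lemma Dn0 : Dn 0 = 1%:M.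
Proof. by rewrite /Dn expr0 mk2_1. Qed.

Lemma in_V h : h \in unitmx -> sval (V h) (Lat h).
Proof. move=> Hh; rewrite V_sval //; exists 1; split; first exact: oner_neq0.
by move=> w; rewrite scale1r. Qed.

Lemma Lat_Lm h : h \in unitmx -> Lat h = Lm h std.
Proof. move=> Hh; by rewrite -{1}(mul1mx h) LatMh // Lat1. Qed.

Lemma Lat_Lm' k h : h \in unitmx -> Lat (k *m h) = Lm h (Lat k).
Proof. move=> Hh; by rewrite LatMh. Qed.

Lemma LatD1 w : Lat (Dn 1) w <-> inO (w 0 0) /\ vge (w 0 1) 1.
Proof.
rewrite LatE; split.
- case=> p [q [Hp Hq ->]]; rewrite r2_mul !mxE /= expr1.
  split; first by rewrite mulr1 mulr0 addr0.
  rewrite mulr0 add0r mulrC; exact: mulpi.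
- case=> H0 H1; exists (w 0 0), (w 0 1 / pi); split => //; first exact: divpi.
  rewrite r2_mul {1}(r2E w) expr1; congr r2; field; done.
Qed.

Lemma std_scaleE c w : std (c *: w) <-> inO (c * w 0 0) /\ inO (c * w 0 1).
Proof. by rewrite stdE !mxE. Qed.

Lemma not_vge1_1 : ~ vge (1 : F) 1.
Proof. case=> [/eqP|]; [by rewrite oner_eq0 | by rewrite v1]. Qed.

Lemma adj_D h : h \in unitmx -> adj pi (V h) (V (Dn 1 *m h)).
Proof.
move=> Hh; have HD : Dn 1 *m h \in unitmx by rewrite unitmx_mul Dn_unit Hh.
exists (Lat h), (Lat (Dn 1 *m h)); split; first exact: in_V.
split; first exact: in_V.
rewrite Lat_Lm' // (Lat_Lm Hh) scaleL_Lm !lsub_Lm //.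
split; last split; last split.
- move=> w; rewrite /scaleL std_scaleE LatD1 => -[H0 H1]; split.
  + have -> : w 0 0 = pi * (pi^-1 * w 0 0) by rewrite mulrA mulfV // mul1r.
    apply: inOM => //; exact: inO_pi.
  + have -> : w 0 1 = pi * (pi^-1 * w 0 1) by rewrite mulrA mulfV // mul1r.
    exact: mulpi.
- move=> H; have : Lat (Dn 1) (r2 1 0) by apply/LatD1; rewrite !mxE /=; split; [exact: inO1|left].
  move/H; rewrite /scaleL std_scaleE !mxE /= mulr1 => -[]; move=> /notO_piV //.
- move=> w /LatD1 [H0 H1]; apply/stdE; split => //; exact: vge1_inO.
- move=> H; have : std (r2 0 1) by apply/std_r2; split; [exact: inO0|exact: inO1].
  move/H/LatD1; rewrite !mxE /= => -[_]; exact: not_vge1_1.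
Qed.

Lemma walkD k : forall i h, h \in unitmx -> walk pi (V (Dn i *m h)) (V (Dn (i + k) *m h)) k.
Proof.
elim: k => [|k IH] i h Hh; first by rewrite addn0; exact: walk0.
apply: (walkS (y := V (Dn i.+1 *m h))).
- rewrite -Dn_mul -mulmxA; apply: adj_D; by rewrite unitmx_mul Dn_unit Hh.
- by rewrite -addSnnS; apply: IH.
Qed.


Lemma nbr_contra (K : 'rV[F]_2 -> Prop) k : K = Lat k ->
  ~ lsubset std (scaleL pi K) -> K (r2 pi^-1 0) -> K (r2 0 pi^-1) -> False.
Proof.
move=> -> H2 H10 H01; apply: H2 => w /stdE [H0 H1].
rewrite /scaleL; have -> : pi^-1 *: w = w 0 0 *: r2 pi^-1 0 + w 0 1 *: r2 0 pi^-1.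
  rewrite {1}(r2E w) !r2_scale ?r2_add ?r2_scale ?r2_add; congr r2; ring.
by apply: LatD; apply: LatZ.
Qed.

Lemma nbr k :
  lsubset (scaleL pi (Lat k)) std -> ~ lsubset std (scaleL pi (Lat k)) ->
  lsubset std (Lat k) -> ~ lsubset (Lat k) std ->
  (exists2 c, inO c & Lat k = Lat (mk2 1 0 (c / pi) pi^-1)) \/ Lat k = Lat (mk2 pi^-1 0 0 1).
Proof.
move=> H1 H2 H3 H4.
have [s [Ks Ns]] : exists s, Lat k s /\ ~ std s.
  by apply: NNPP => N; apply: H4 => w Kw; apply: NNPP => Sw; apply: N; exists w.
have Ss : std (pi *: s) by apply: H1; rewrite /scaleL scalerA mulVf // scale1r.
move: Ss; rewrite std_scaleE => -[Ha Hb].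
set a := pi * s 0 0 in Ha; set b := pi * s 0 1 in Hb.
have Es : s = r2 (a / pi) (b / pi).
  rewrite {1}(r2E s) /a /b; congr r2; field; done.
have C := @nbr_contra (Lat k) k erefl H2.
have e10 : Lat k (r2 1 0) by apply: H3; apply/std_r2; split; [exact: inO1|exact: inO0].
have e01 : Lat k (r2 0 1) by apply: H3; apply/std_r2; split; [exact: inO0|exact: inO1].
case: (classic (vge b 1)) => Hb1.
-
  have Na : ~ vge a 1.
    move=> Ha1; apply: Ns; rewrite Es; apply/std_r2; split; exact: divpi.
  have [na va] := unitO Ha Na.
  have Hb' : inO (b / pi) by exact: divpi.
  have R1 : Lat k (r2 pi^-1 0).
    have -> : r2 pi^-1 0 = a^-1 *: (s - (b / pi) *: r2 0 1).
      rewrite Es r2_scale -scaleN1r ?r2_scale ?r2_add ?r2_scale ?r2_add; congr r2; field; by apply/andP.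
    apply: LatZ; first exact: inOV.
    apply: LatB => //; exact: LatZ.
  right; apply: functional_extensionality => x; apply: pext; split.
  + move=> Kx; have Sx : std (pi *: x) by apply: H1; rewrite /scaleL scalerA mulVf // scale1r.
    move: Sx; rewrite std_scaleE => -[HP HQ].
    case: (classic (vge (pi * x 0 1) 1)) => HQ1.
    * apply/LatE; exists (pi * x 0 0), (pi * x 0 1 / pi); split => //; first exact: divpi.
      rewrite r2_mul {1}(r2E x); congr r2; field; done.
    * exfalso; have [nQ vQ] := unitO HQ HQ1.
      apply: C => //.
      have -> : r2 0 pi^-1 = (pi * x 0 1)^-1 *: (x - (pi * x 0 0) *: r2 pi^-1 0).
        move: nQ; rewrite mulf_eq0 negb_or => /andP [_].
        move: (x 0 0) (x 0 1) (r2E x) => X0 X1 -> nx.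
        rewrite -scaleN1r !r2_scale ?r2_add ?r2_scale ?r2_add ?mxE /=.
        congr r2; field; by apply/andP.
      apply: LatZ; first exact: inOV.
      apply: LatB => //; exact: LatZ.
  + case/LatE=> p [q [Hp Hq ->]]; rewrite r2_mul_split.
    by apply: LatD; apply: LatZ.
-
  have [nb vb] := unitO Hb Hb1.
  set c := a / b.
  have Hc : inO c by apply: inOM => //; exact: inOV.
  left; exists c => //.
  have R2 : Lat k (r2 (c / pi) pi^-1).
    have -> : r2 (c / pi) pi^-1 = b^-1 *: s.
      rewrite Es r2_scale /c; congr r2; field; by apply/andP.
    apply: LatZ => //; exact: inOV.
  apply: functional_extensionality => x; apply: pext; split.
  + move=> Kx; have Sx : std (pi *: x) by apply: H1; rewrite /scaleL scalerA mulVf // scale1r.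
    move: Sx; rewrite std_scaleE => -[HP HQ].
    set P := pi * x 0 0 in HP; set Q := pi * x 0 1 in HQ.
    case: (classic (vge (P - Q * c) 1)) => Hd.
    * apply/LatE; exists ((P - Q * c) / pi), Q; split => //; first exact: divpi.
      rewrite r2_mul {1}(r2E x) /P /Q; congr r2; field; done.
    * exfalso.
      have Hd0 : inO (P - Q * c) by apply: inOB => //; exact: inOM.
      have [nd vd] := unitO Hd0 Hd.
      have R1 : Lat k (r2 pi^-1 0).
        have -> : r2 pi^-1 0 = (P - Q * c)^-1 *: (x - Q *: r2 (c / pi) pi^-1).
          move: nd; rewrite /P /Q; move: (x 0 0) (x 0 1) (r2E x) => X0 X1 -> nd.
          rewrite -scaleN1r !r2_scale ?r2_add ?r2_scale ?r2_add ?mxE /=.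
          congr r2; field; by apply/andP.
        apply: LatZ; first exact: inOV.
        apply: LatB => //; exact: LatZ.
      apply: C => //.
      have -> : r2 0 pi^-1 = r2 (c / pi) pi^-1 - c *: r2 pi^-1 0.
        rewrite -scaleN1r !r2_scale ?r2_add ?r2_scale ?r2_add; congr r2; field; done.
      apply: LatB => //; exact: LatZ.
  + case/LatE=> p [q [Hp Hq ->]]; rewrite r2_mul_split.
    by apply: LatD; apply: LatZ.
Qed.


Lemma unitM (A B : 'M[F]_2) : A \in unitmx -> B \in unitmx -> A *m B \in unitmx.
Proof. by move=> HA HB; rewrite unitmx_mul HA HB. Qed.

Lemma mk2_unitD (a d : F) : a != 0 -> d != 0 -> mk2 a 0 0 d \in unitmx.
Proof. move=> Ha Hd; apply: mk2_unit; by rewrite mulr0 subr0 mulf_neq0. Qed.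

Lemma Lat_eq_mul k1 k2 h : h \in unitmx -> Lat k1 = Lat k2 -> Lat (k1 *m h) = Lat (k2 *m h).
Proof. by move=> Hh E; rewrite !Lat_Lm' // E. Qed.

Lemma geo n : forall x z : vertex v, dist pi x z n ->
  exists2 g, g \in unitmx & x = V g /\ z = V (Dn n *m g).
Proof.
elim: n => [|n IH] x z [W Hmin].
- inversion W; subst.
  case: (V_surj z) => g Hg ->; exists g => //; by rewrite Dn0 mul1mx.
- inversion W as [|x' y z' n' Hadj Wy]; subst.
  have Dy : dist pi y z n.
    split => // m Wm; have := Hmin _ (walkS Hadj Wm); done.
  case: (IH _ _ Dy) => g0 Hg0 [Ey Ez]; subst.
  case: Hadj => L [L' [Hx [Hy [H1 [H2 [H3 H4]]]]]].
  case: (V_mem Hg0 Hy) => c [Hc Hg EL']; subst L'.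
  set g := c *: g0 in Hg H1 H2 H3 H4.
  have Ez : V (Dn n *m g0) = V (Dn n *m g).
    by rewrite /g -scalemxAr V_hom // unitM // Dn_unit.
  rewrite Ez in Hmin *; clear Ez W Wy Dy.
  case: (V_surj x) => k0 Hk0 Ex; subst x.
  case: (V_mem Hk0 Hx) => c' [Hc' Hk EL]; subst L.
  rewrite -(V_hom Hk0 Hc') in Hmin *; set k := c' *: k0 in Hk H1 H2 H3 H4 Hmin *.
  rewrite (Lat_Lm Hg) -(mulmxKV Hg k) (Lat_Lm' _ Hg) scaleL_Lm !lsub_Lm // in H1 H2 H3 H4.
  have Hk' : k *m invmx g \in unitmx by rewrite unitM // unitmx_inv.
  have Ex : V k = V ((k *m invmx g) *m g) by rewrite mulmxKV.
  rewrite Ex in Hmin *; set k' := k *m invmx g in H1 H2 H3 H4 Hk' Hmin *.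
  case: (nbr H1 H2 H3 H4) => [[c0 Hc0 E]|E].
  +
    have HP : mk2 1 0 (c0 / pi) pi^-1 \in unitmx.
      apply: mk2_unit; by rewrite ?mulr0 ?mul0r subr0 mul1r invr_eq0.
    have -> : V (k' *m g) = V (mk2 1 0 (c0 / pi) pi^-1 *m g).
      apply: V_eq; [exact: unitM | exact: unitM | exact: Lat_eq_mul].
    exists (mk2 1 0 (c0 / pi) pi^-1 *m g); first exact: unitM.
    split => //.
    set Q := mk2 1 0 (pi ^+ n * c0) 1.
    set Q' := mk2 1 0 (- (pi ^+ n * c0)) 1.
    have HQ : oent Q by apply: mk2_oent; [exact: inO1|exact: inO0|apply: inOM => //; exact: inO_exp|exact: inO1].
    have HQ' : oent Q'.
      by apply: mk2_oent; [exact: inO1|exact: inO0|apply: inON; apply: inOM => //; exact: inO_exp|exact: inO1].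
    have EQ : Q' *m Q = 1%:M.
      rewrite /Q /Q' mk2_mul -mk2_1; congr mk2; ring.
    rewrite -(V_GLo HQ HQ' EQ) ?unitM ?Dn_unit // mulmxA mulmxA; congr V; congr mulmx.
    rewrite /Q /Dn mk2_mul mk2_mul; congr mk2; rewrite ?exprS; field; done.
  +
    have HP : mk2 pi^-1 0 0 1 \in unitmx by apply: mk2_unitD; [exact: piV0|exact: oner_neq0].
    have EB : V (k' *m g) = V (mk2 pi^-1 0 0 1 *m g).
      apply: V_eq; [exact: unitM | exact: unitM | exact: Lat_eq_mul].
    rewrite EB in Hmin *.
    case: n Hmin IH => [|m] Hmin _.
    * pose S : 'M[F]_2 := mk2 0 1 1 0.
      have HS : oent S by apply: mk2_oent; [exact: inO0|exact: inO1|exact: inO1|exact: inO0].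
      have ES : S *m S = 1%:M by rewrite /S mk2_mul -mk2_1; congr mk2; ring.
      exists (S *m (mk2 pi^-1 0 0 1 *m g)); first by rewrite !unitM // mk2_unit // mulr0 mul1r sub0r oppr_eq0 oner_neq0.
      split; first by rewrite (V_GLo HS HS ES) // unitM.
      rewrite Dn0 mul1mx mulmxA mulmxA.
      have -> : Dn 1 *m S *m mk2 pi^-1 0 0 1 = S.
        rewrite /Dn /S !mk2_mul expr1; congr mk2; field; done.
      by rewrite (V_GLo HS HS ES).
    * exfalso.
      have Ex' : V (mk2 pi^-1 0 0 1 *m g) = V (Dn 1 *m g).
        rewrite -(V_hom _ Hpi0) ?unitM // scalemxAl mk2_scale /Dn expr1.
        congr V; congr mulmx; congr mk2; field; done.
      have Wm := walkD m 1 Hg.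
      rewrite add1n -Ex' in Wm.
      have := Hmin _ Wm; lia.
Qed.


Lemma main_sec e (x1 x2 y1 y2 : vertex v) n :
  dist pi x1 x2 n -> dist pi y1 y2 n ->
  exists g : vertex v -> vertex v, in_Ghat pi e g /\ g x1 = y1 /\ g x2 = y2.
Proof.
move=> D1 D2.
case: (geo D1) => g Hg [-> ->]; case: (geo D2) => h Hh [-> ->].
have HA : invmx g *m h \in unitmx by rewrite unitM // unitmx_inv.
exists (fA (invmx g *m h)); split; first exact: fA_Ghat.
rewrite !fA_V // ?unitM ?Dn_unit // mulmxA !mulmxA mulmxV // mul1mx.
split => //; by rewrite mulmxK.
Qed.

End Val.

Theorem mainTheorem6 (F : fieldType) (v : F -> int) (pi : F)
  (hF : nonarch_local_field v) (hpi : pi != 0 /\ v pi = 1)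
  (e : nat) (he : (1 <= e)%N)
  (x1 x2 y1 y2 : vertex v) (n : nat) :
  dist pi x1 x2 n -> dist pi y1 y2 n ->
  exists g : vertex v -> vertex v,
    in_Ghat pi e g /\ g x1 = y1 /\ g x2 = y2.
Proof.
case: hF => [[Hm Hu _] _ _]; case: hpi => Hpi0 Hpi1.
exact: (main_sec Hm Hu Hpi0 Hpi1).
Qed.
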